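(* Let $(\mathbf F,\prec)$ be an IS-family over a finite set $V$. Let $S\in\mathbf F$ and $v\in Vis(S)\setminus S$. Then there is $S^*\in\mathbf F$ with $S^*\prec S$ such that $v\in hat(S^* )$ and $S$ is the witness of $v$ w.r.t. $S^*$.
   Context: Let $V$ be a finite set, $n=|V|$, $\mathbf F$ a family of subsets of $V$ and $\prec$ a strict partial order on $\mathbf F$; $S\preceq S'$ means $S\prec S'$ or $S=S'$. For $S\in\mathbf F$ and $v\in V$, $S$ covers $v$ if there is $S'\in\mathbf F$ with $S'\prec S$ and $v\in S'\setminus S$. $Pred(S)$ is the set of $S'\in\mathbf F$ with $S'\prec S$ such that there is no $S''\in\mathbf F$ with $S'\prec S''\prec S$. The visible set $Vis(S)$ is the set of $v\in V$ such that $v\in S'$ for some $S'\in Pred(S)$ and $v$ is not covered by any element of $Pred(S)$. For $S\in\mathbf F$ and $v\in S$, a witness of $v$ w.r.t. $S$ is a $\prec$-minimal element $S'\in\mathbf F$ with $S\prec S'$ and $v\in S\setminus S'$. $(\mathbf F,\prec)$ is an IS-family if: (SE) there is a unique element $sm(\mathbf F)\in\mathbf F$ with $sm(\mathbf F)\prec S$ for every other $S\in\mathbf F$; (SM) $S_1\prec S_2$ implies $|S_1|<|S_2|$; (SW) for every $S\in\mathbf F$ and $v\in S$ there is at most one witness of $v$ w.r.t. $S$; (TE) if $S_1\prec S_2\prec S_3$ are in $\mathbf F$ and $v\in S_1\setminus S_2$ then $v\in S_1\setminus S_3$; (LVS) for every $S\in\mathbf F$ and $S'\in Pred(S)$, $|S'|\le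 |Vis(S)|$; (DVS) for every $S\in\mathbf F$ with $S\ne sm(\mathbf F)$, $Vis(S)$ is not a subset of $S$; (EC) $sm(\mathbf F)$ can be computed in $O(n^3)$ time, for given $S\in\mathbf F$ and $v\in S$ the witness of $v$ w.r.t. $S$ can be computed (or its nonexistence reported) in $O(n^3)$ time, and $S_1\prec S_2$ can be tested in $O(|S_1|)$ time. Notation: $hat(S)=S\setminus\bigcup_{S'\prec S}S'$. *)

(* Defs.v *)
From mathcomp Require Import all_boot.
Set Implicit Arguments. Unset Strict Implicit. Unset Printing Implicit Defensive.

Section ISFamily.
Variables (V : finType) (F : {set {set V}}) (prec : rel {set V}).

Definition strict_po : Prop :=
  (forall S, S \in F -> ~~ prec S S) /\
  (forall S1 S2 S3, S1 \in F -> S2 \in F -> S3 \in F ->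
     prec S1 S2 -> prec S2 S3 -> prec S1 S3).

Definition covers (S : {set V}) (v : V) : bool :=
  [exists S' in F, prec S' S && (v \in S' :\: S)].

Definition Pred (S : {set V}) : {set {set V}} :=
  [set S' in F | prec S' S &&
     ~~ [exists S'' in F, prec S' S'' && prec S'' S]].

Definition Vis (S : {set V}) : {set V} :=
  [set v | [exists S' in Pred S, v \in S'] &&
           ~~ [exists S' in Pred S, covers S' v]].

Definition witness (S : {set V}) (v : V) (W : {set V}) : bool :=
  [&& W \in F, prec S W, v \in S :\: W &
     ~~ [exists S'' in F, [&& prec S'' W, prec S S'' & v \in S :\: S'']]].

Definition hat (S : {set V}) : {set V} :=
  S :\: \bigcup_(S' in F | prec S' S) S'.

Definition is_sm (sm : {set V}) : Prop :=
  sm \in F /\ forall S, S \in F -> S != sm -> prec sm S.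

Definition IS_family : Prop :=
  strict_po /\
  (exists sm, is_sm sm /\ forall sm', is_sm sm' -> sm' = sm) /\
  (* (SM) *)
  (forall S1 S2, S1 \in F -> S2 \in F -> prec S1 S2 -> #|S1| < #|S2|) /\
  (forall S v W1 W2, S \in F -> v \in S ->
     witness S v W1 -> witness S v W2 -> W1 = W2) /\
  (* (TE) *)
  (forall S1 S2 S3 v, S1 \in F -> S2 \in F -> S3 \in F ->
     prec S1 S2 -> prec S2 S3 -> v \in S1 :\: S2 -> v \in S1 :\: S3) /\
  (forall S S', S \in F -> S' \in Pred S -> #|S'| <= #|Vis S|) /\
  (forall sm S, is_sm sm -> S \in F -> S != sm -> ~~ (Vis S \subset S)).

End ISFamily.

(* Main.v *)
Require Import Defs.
From mathcomp Require Import all_boot.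

Lemma ex_min_card (T : finType) (P : pred T) (f : T -> nat) x :
  P x -> exists y, P y /\ forall z, P z -> f y <= f z.
Proof.
move=> Px; case: (arg_minnP f Px) => y Py H; by exists y.
Qed.

Lemma ex_max_card (T : finType) (P : pred T) (f : T -> nat) x :
  P x -> exists y, P y /\ forall z, P z -> f z <= f y.
Proof.
move=> Px; case: (arg_maxnP f Px) => y Py H; by exists y.
Qed.

Theorem proposition3 (V : finType) (F : {set {set V}}) (prec : rel {set V})
  (HIS : IS_family F prec) (S : {set V}) (v : V)
  (HS : S \in F) (Hv : v \in Vis F prec S :\: S) :
  exists Sstar : {set V},
    [/\ Sstar \in F, prec Sstar S, v \in hat F prec Sstar & witness F prec Sstar v S].
Proof.
case: HIS => [[Hirr Htr] [_ [HSM [_ [HTE _]]]]].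
move: Hv; rewrite !inE => /andP[vS /andP[/existsP[S0 /andP[S0P vS0]] Hnc]].
move: S0P; rewrite inE => /andP[S0F /andP[S0S _]].
have [St [/andP[/andP[StF StS] vSt] Hmin]] :=
  @ex_min_card _ (fun T => (T \in F) && prec T S && (v \in T)) (fun T => #|T|) S0
   ltac:(by rewrite /= S0F S0S vS0).
exists St; split => //.
- rewrite /hat inE vSt andbT; apply/bigcupP => -[U /andP[UF USt] vU].
  have := Hmin U; rewrite UF vU (Htr _ _ _ UF StF HS USt StS) /= => /(_ isT).
  by rewrite leqNgt (HSM _ _ UF StF USt).
- rewrite /witness HS StS /= inE vS vSt /=.
  apply/negP => /existsP[U /andP[UF /and3P[US StU vU]]].
  have [P [/andP[/andP[PF PS] UP] Hmax]] :=
    @ex_max_card _ (fun T => (T \in F) && prec T S && ((T == U) || prec U T))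
      (fun T => #|T|) U ltac:(by rewrite /= UF US eqxx).
  have PPred : P \in Pred F prec S.
    rewrite inE PF PS /=; apply/negP => /existsP[W /andP[WF /andP[PW WS]]].
    have : (W \in F) && prec W S && ((W == U) || prec U W).
      rewrite WF WS /=; apply/orP; right.
      case/orP: UP => [/eqP <- //|UP]; exact: (Htr _ _ _ UF PF WF UP PW).
    move/Hmax; by rewrite leqNgt (HSM _ _ PF WF PW).
  move/negP: Hnc; apply; apply/existsP; exists P; rewrite PPred /=.
  apply/existsP; exists St; rewrite StF /=.
  case/orP: UP => [/eqP ->|UP].
    by rewrite StU; move: vU; rewrite inE => /andP[-> ->].
  rewrite (Htr _ _ _ StF UF PF StU UP) /=.
  by apply: (HTE St U P v StF UF PF StU UP).
Qed.
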